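(* Let $f:\mathbb{R}^\ell\times\mathbb{R}^m\to\mathbb{R}^\ell$ be $C^1$, let $\Lambda$ be a parameter shift with limits $\lambda_\pm$, and let $X$ define a stable path with endpoints $X_\pm$. Fix $r>0$ and let $\{x_n^r\}_{n\in\mathbb{Z}}$ be the unique solution of $x_{n+1}=f(x_n,\Lambda(rn))$ with $\lim_{n\to-\infty}x_n^r=X_-$. Then there exists an open set $U\subset\mathbb{R}^\ell$ containing $X_-$ such that for all $y\in U$ and all $n_1\in\mathbb{Z}$, $$\lim_{n_0\to-\infty}\|\phi(n_1,n_0,y)-x_{n_1}^r\|=0.$$
   Context: A parameter shift is a $C^1$ function $\Lambda:\mathbb{R}\to\mathbb{R}^m$ with $\lim_{s\to\pm\infty}\Lambda(s)=\lambda_\pm$ and $\lim_{s\to\pm\infty}\Lambda'(s)=0$. A stable path is given by $X:\mathbb{R}\to\mathbb{R}^\ell$ such that: $X(s)$ is a fixed point of $f(\cdot,\Lambda(s))$ for every $s$; $\{(s,X(s))\}$ is a connected curve; the limits $X_\pm=\lim_{s\to\pm\infty}X(s)$ exist and are fixed points of $f(\cdot,\lambda_\pm)$; and the spectral radius of $D_xf(X(s),\Lambda(s))$ is $<1$ for all $s\in\mathbb{R}\cup\{\pm\infty\}$ (with $X(\pm\infty)=X_\pm$, $\Lambda(\pm\infty)=\lambda_\pm$). (It is known that a unique solution $\{x^r_n\}$ with $x^r_n\to X_-$ as $n\to-\infty$ exists.) For integers $n_0\le n_1$ and $y\in\mathbb{R}^\ell$, $\phi(n_1,n_0,y)$ denotes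 $y_{n_1}$, where $\{y_n\}_{n\ge n_0}$ is the forward orbit of $y_{n+1}=f(y_n,\Lambda(rn))$ with $y_{n_0}=y$. *)

(* Defs.v *)
From mathcomp Require Import all_boot all_algebra.
From mathcomp Require Import all_classical all_reals all_analysis.
From mathcomp.real_closed Require Import complex.
Import GRing.Theory Num.Theory numFieldNormedType.Exports.

Set Implicit Arguments.
Unset Strict Implicit.
Unset Printing Implicit Defensive.

Local Open Scope classical_set_scope.
Local Open Scope ring_scope.

Section Defs.
Variable R : realType.

Definition C1_map n k (g : 'rV[R]_n -> 'rV[R]_k) : Prop :=
  (forall p, differentiable g p) /\ continuous (jacobian g).

(* f : R^l x R^m -> R^l, identified with a map on R^(l+m) = R^l x R^m. *)
Definition uncurry_rv l m (f : 'rV[R]_l -> 'rV[R]_m -> 'rV[R]_l) :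
  'rV[R]_(l + m) -> 'rV[R]_l := fun z => f (lsubmx z) (rsubmx z).

Definition C1_curve m (g : R -> 'rV[R]_m) : Prop :=
  (forall s, differentiable g s) /\ continuous (derive1 g).

Definition eigenvalues n (A : 'M[R]_n) : set R[i] :=
  [set z | root (map_poly (fun x : R => real_complex R x) (char_poly A)) z].

Definition spectral_radius n (A : 'M[R]_n) : R :=
  sup [set complex.Re `|z| | z in eigenvalues A].

Definition Dx l m (f : 'rV[R]_l -> 'rV[R]_m -> 'rV[R]_l) x lam : 'M[R]_l :=
  jacobian (fun y => f y lam) x.

Definition parameter_shift m (Lam : R -> 'rV[R]_m) (lm lp : 'rV[R]_m) : Prop :=
  C1_curve Lam /\
  Lam s @[s --> -oo%R] --> lm /\ Lam s @[s --> +oo%R] --> lp /\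
  derive1 Lam s @[s --> -oo%R] --> 0 /\ derive1 Lam s @[s --> +oo%R] --> 0.

Definition stable_path l m (f : 'rV[R]_l -> 'rV[R]_m -> 'rV[R]_l)
  (Lam : R -> 'rV[R]_m) (lm lp : 'rV[R]_m) (X : R -> 'rV[R]_l) (Xm Xp : 'rV[R]_l) : Prop :=
  (forall s, f (X s) (Lam s) = X s) /\
  connected (range (fun s => (s, X s))) /\
  X s @[s --> -oo%R] --> Xm /\ X s @[s --> +oo%R] --> Xp /\
  f Xm lm = Xm /\ f Xp lp = Xp /\
  (forall s, spectral_radius (Dx f (X s) (Lam s)) < 1) /\
  spectral_radius (Dx f Xm lm) < 1 /\ spectral_radius (Dx f Xp lp) < 1.

(* orbit f Lam r n0 y k = y_(n0+k) for y_(n+1) = f(y_n, Lam(r n)), y_(n0) = y *)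
Fixpoint orbit l m (f : 'rV[R]_l -> 'rV[R]_m -> 'rV[R]_l) (Lam : R -> 'rV[R]_m)
  (r : R) (n0 : int) (y : 'rV[R]_l) (k : nat) : 'rV[R]_l :=
  match k with
  | 0%N => y
  | k'.+1 => f (orbit f Lam r n0 y k') (Lam (r * (n0 + k'%:Z)%:~R))
  end.

(* phi(n1, n0, y) = y_(n1), meaningful for n0 <= n1 *)
Definition phi l m (f : 'rV[R]_l -> 'rV[R]_m -> 'rV[R]_l) (Lam : R -> 'rV[R]_m)
  (r : R) (n1 n0 : int) (y : 'rV[R]_l) : 'rV[R]_l :=
  orbit f Lam r n0 y `|n1 - n0|%N.

End Defs.

(* Main.v *)
Require Import Defs.
From mathcomp Require Import all_boot all_order all_algebra.
From mathcomp Require Import all_classical all_reals all_analysis.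
From mathcomp.real_closed Require Import complex.
From mathcomp Require Import ring lra zify.
From HB Require Import structures.
Import Order.TTheory GRing.Theory Num.Theory numFieldNormedType.Exports.
Local Open Scope classical_set_scope.
Local Open Scope ring_scope.

Section Spec.
Variable R : realType.

Definition small (u : nat -> R) :=
  forall e : R, 0 < e -> exists N, forall n, (N <= n)%N -> u n < e.

Lemma near_oo_ex (P : nat -> Prop) : (\forall n \near \oo, P n) ->
  exists N, forall n, (N <= n)%N -> P n.
Proof. by case=> N _ HN; exists N => n hn; apply: HN. Qed.

Lemma geo_small (c : R) {a e : R} : 0 <= a -> a < 1 -> 0 < e ->
  exists N, forall n, (N <= n)%N -> a ^+ n * c < e.
Proof.
move=> a0 a1 e0.
have c1 : 0 < `|c| + 1 by rewrite ltr_pwDr // normr_ge0.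
have e1 : 0 < e / (`|c| + 1) by rewrite divr_gt0.
have := cvg_expr (z := a); rewrite ger0_norm // => /(_ a1).
move/cvgrPdist_lt => /(_ _ e1) /near_oo_ex [N HN]; exists N => n /HN.
rewrite sub0r normrN ger0_norm ?exprn_ge0 // => h.
apply: (le_lt_trans (y := a ^+ n * (`|c| + 1))).
  apply: ler_wpM2l; first by rewrite exprn_ge0.
  by apply: le_trans (ler_norm c) _; rewrite lerDl.
by rewrite -ltr_pdivlMr.
Qed.

Lemma rec_small (al : R) (u b : nat -> R) : 0 <= al -> al < 1 ->
  (forall n, 0 <= u n) ->
  (forall n, u n.+1 <= al * u n + b n) -> small b -> small u.
Proof.
move=> a0 a1 u0 rec sb e e0.
have e1 : 0 < e * (1 - al) / 2 by rewrite divr_gt0 // mulr_gt0 // subr_gt0.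
have [N HN] := sb _ e1.
have key : forall k, u (N + k)%N <= al ^+ k * u N + e / 2.
  elim=> [|k IH]; first by rewrite addn0 expr0 mul1r lerDl divr_ge0 // ltW.
  rewrite addnS (le_trans (rec _)) //.
  have /ltW hb := HN (N + k)%N (leq_addr _ _).
  apply: le_trans (lerD (ler_wpM2l a0 IH) hb) _.
  rewrite exprS le_eqVlt; apply/orP; left; apply/eqP; ring.
have e2 : 0 < e / 2 by rewrite divr_gt0.
have [K HK] := geo_small (u N) a0 a1 e2.
exists (N + K)%N => n hn.
have -> : n = (N + (n - N))%N by rewrite subnKC // (leq_trans _ hn) // leq_addr.
apply: le_lt_trans (key _) _.
have : (K <= n - N)%N by rewrite leq_subRL // (leq_trans _ hn) // leq_addr.
move/HK => h; rewrite [X in _ < X](splitr e); by rewrite ltrD2r.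
Qed.

Local Open Scope complex_scope.
Local Notation C := R[i].
Definition cn (z : C) : R := Normc.normc z.
Lemma cnE z : `|z| = (cn z)%:C. Proof. by []. Qed.
Lemma cn_ge0 z : 0 <= cn z.
Proof. by have := normr_ge0 z; rewrite cnE lecR. Qed.
Lemma cnD x y : cn (x + y) <= cn x + cn y.
Proof. by have := ler_normD x y; rewrite !cnE -rmorphD lecR. Qed.
Lemma cnM x y : cn (x * y) = cn x * cn y.
Proof. exact: Normc.normcM. Qed.
Lemma cnR (x : R) : cn x%:C = `|x|.
Proof. by rewrite /cn /Normc.normc /= expr0n addr0 sqrtr_sqr. Qed.
Lemma cn0 : cn 0 = 0.
Proof. by have := cnR 0; rewrite normr0. Qed.


Definition smallC (a : nat -> C) := small (fun k => cn (a k)).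

Lemma claim (n' : nat) (B : 'M[C]_n'.+1) (s : seq C) :
  (forall z, z \in s -> cn z < 1) ->
  forall M : 'M[C]_n'.+1, horner_mx B (\prod_(z <- s) ('X - z%:P)) *m M = 0 ->
  forall i j, smallC (fun k => (B ^+ k *m M) i j).
Proof.
elim: s => [|z s IH] hs M.
  rewrite big_nil rmorph1 mul1mx => -> i j e e0; exists 0%N => k _.
  by rewrite mulmx0 mxE cn0.
rewrite big_cons => hM i j.
set q := \prod_(z0 <- s) ('X - z0%:P) in hM.
pose M' := (B - z%:M) *m M.
have hM' : horner_mx B q *m M' = 0.
  have E : horner_mx B q *m (B - z%:M) = horner_mx B (q * ('X - z%:P)).
    by rewrite rmorphM rmorphB /= horner_mx_X horner_mx_C mulmxE.
  by rewrite /M' mulmxA E mulrC.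
have := IH (fun w hw => hs w (mem_behead (s := z :: s) hw)) M' hM' i j.
have hz : cn z < 1 by apply: hs; rewrite inE eqxx.
move=> sb.
apply: (rec_small (cn z) _ (fun k => cn ((B ^+ k *m M') i j))) => //.
- exact: cn_ge0.
- move=> k; exact: cn_ge0.
- move=> k.
  have -> : (B ^+ k.+1 *m M) i j = z * (B ^+ k *m M) i j + (B ^+ k *m M') i j.
    rewrite /M' mulmxBl mul_scalar_mx mulmxBr -scalemxAr mulmxA mulmxE -exprSr -mulmxE.
    by rewrite !mxE addrCA subrr addr0.
  by rewrite -cnM cnD.
Qed.

Lemma spec_small (n' : nat) (J : 'M[R]_n'.+1) : spectral_radius J < 1 ->
  forall i j, small (fun k => `|(J ^+ k) i j|).
Proof.
move=> hJ i j.
pose B := map_mx (real_complex R) J.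
have [rs hrs] := closed_field_poly_normal (char_poly B).
rewrite (monicP (char_poly_monic B)) scale1r in hrs.
have hroot : forall z, z \in rs -> cn z < 1.
  move=> z zin.
  have rz : root (char_poly B) z by rewrite hrs root_prod_XsubC.
  have eig : eigenvalues J z.
    by rewrite /eigenvalues /= (map_char_poly (real_complex R)).
  apply: le_lt_trans hJ; rewrite /spectral_radius.
  apply: sup_upper_bound; last by exists z.
  split; first by exists (cn z), z.
  exists (\big[Order.max/0]_(w <- rs) cn w) => _ [w hw <-].
  have win : w \in rs.
    by rewrite -root_prod_XsubC -hrs /B -map_char_poly.
  change (cn w <= \big[Num.max/0]_(w0 <- rs) cn w0).
  by apply: le_bigmax_seq.
have := @claim n' B rs hroot 1.
rewrite mulmx1 -hrs Cayley_Hamilton => /(_ erefl i j) h e e0.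
have [N HN] := h e e0; exists N => k /HN.
have -> : B ^+ k = map_mx (real_complex R) (J ^+ k).
  elim: k {HN} => [|k IH]; first by rewrite !expr0 map_mx1.
  by rewrite !exprS IH map_mxM.
by rewrite mulmx1 mxE cnR.
Qed.
End Spec.
Section Norms.
Variable R : realType.

Lemma mx_entry_le p q (M : 'M[R]_(p, q)) i j : `|M i j| <= `|M|.
Proof.
rewrite [leRHS]/Num.Def.normr /= mx_normrE.
exact: (le_bigmax _ (fun ij : 'I_p * 'I_q => `|M ij.1 ij.2|) (i, j)).
Qed.

Lemma mx_norm_le p q (M : 'M[R]_(p, q)) c : 0 <= c ->
  (forall i j, `|M i j| <= c) -> `|M| <= c.
Proof.
move=> c0 h; rewrite [leLHS]/Num.Def.normr /= mx_normrE.
by apply: bigmax_le => // -[i j] _; apply: h.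
Qed.

Lemma rowmul_le p q (v : 'rV[R]_p) (M : 'M[R]_(p, q)) c : 0 <= c ->
  (forall i j, `|M i j| <= c) -> `|v *m M| <= p%:R * c * `|v|.
Proof.
move=> c0 h; apply: mx_norm_le.
  by rewrite mulr_ge0 // mulr_ge0 // ler0n.
move=> i j; rewrite mxE.
apply: le_trans (ler_norm_sum _ _ _) _.
apply: (@le_trans _ _ (\sum_(k < p) (c * `|v|))).
  apply: ler_sum => k _; rewrite normrM mulrC.
  apply: ler_pM => //.
  by rewrite (ord1 i); apply: mx_entry_le.
by rewrite sumr_const card_ord -[X in X <= _]mulr_natl mulrA.
Qed.

Lemma rowmul_norm p q (v : 'rV[R]_p) (M : 'M[R]_(p, q)) :
  `|v *m M| <= p%:R * `|M| * `|v|.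
Proof. apply: rowmul_le => //; exact: mx_entry_le. Qed.

Section Adapted.
Variables (p : nat) (J : 'M[R]_p) (K : nat).
Hypothesis K0 : (0 < K)%N.
Hypothesis hK : forall v : 'rV[R]_p, `|v *m J ^+ K| <= `|v| / 2.

Definition Nn (v : 'rV[R]_p) := \sum_(j < K) `|v *m J ^+ j|.
Definition Cn := 1 + \sum_(j < K) p%:R * `|J ^+ j|.

Lemma Nn_ge0 v : 0 <= Nn v.
Proof. by apply: sumr_ge0 => j _. Qed.

Lemma Nn_ge v : `|v| <= Nn v.
Proof.
rewrite /Nn; case: K K0 => // K' _.
by rewrite big_ord_recl /= expr0 mulmx1 lerDl; apply: sumr_ge0.
Qed.

Lemma Cn_ge1 : 1 <= Cn.
Proof.
rewrite /Cn lerDl; apply: sumr_ge0 => j _; apply: mulr_ge0 => //.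
Qed.

Lemma Cn_gt0 : 0 < Cn.
Proof. exact: lt_le_trans ltr01 Cn_ge1. Qed.

Lemma Nn_le v : Nn v <= Cn * `|v|.
Proof.
rewrite /Cn mulrDl mul1r; apply: (@le_trans _ _ (\sum_(j < K) p%:R * `|J ^+ j| * `|v|)).
  by apply: ler_sum => j _; apply: rowmul_norm.
by rewrite -mulr_suml lerDr.
Qed.

Lemma NnD u v : Nn (u + v) <= Nn u + Nn v.
Proof.
rewrite /Nn -big_split /=; apply: ler_sum => j _.
by rewrite mulmxDl ler_normD.
Qed.

Lemma NnN v : Nn (- v) = Nn v.
Proof. by apply: eq_bigr => j _; rewrite mulNmx normrN. Qed.

Lemma NnJ v : Nn (v *m J) <= (1 - (2 * Cn)^-1) * Nn v.
Proof.
have E : Nn (v *m J) = Nn v + `|v *m J ^+ K| - `|v|.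
  rewrite /Nn; case: K K0 => // K' _.
  pose a := fun j : nat => `|v *m J ^+ j|.
  have S1 : \sum_(j < K'.+2) a j = \sum_(j < K'.+1) a j + a K'.+1 by rewrite big_ord_recr.
  have S2 : \sum_(j < K'.+2) a j = a 0%N + \sum_(j < K'.+1) a j.+1 by rewrite big_ord_recl.
  have S3 : \sum_(j < K'.+1) `|v *m J *m J ^+ j| = \sum_(j < K'.+1) a j.+1.
    by apply: eq_bigr => j _; rewrite /a -mulmxA; congr (`|v *m _|); rewrite mulmxE -exprS.
  have a0 : a 0%N = `|v| by rewrite /a expr0 mulmx1.
  rewrite S3; rewrite -/(a K'.+1); move: S1 S2; rewrite a0 => S1 S2.
  have : \sum_(j < K'.+1) a j.+1 = \sum_(j < K'.+1) a j + a K'.+1 - `|v|.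
    by rewrite -S1 S2; ring.
  by [].
rewrite E.
have h1 := hK v.
have h2 := Nn_le v.
have h3 : Nn v / Cn <= `|v| by rewrite ler_pdivrMr ?Cn_gt0 // mulrC.
have -> : (1 - (2 * Cn)^-1) * Nn v = Nn v - (Nn v / Cn) / 2.
  have := Cn_gt0; rewrite invfM => hC; field; by rewrite gt_eqF.
lra.
Qed.

End Adapted.
End Norms.
Section Calc.
Variable R : realType.

Lemma derive_ext (U V W : normedModType R) (G : U -> W) (H : V -> W) a v a' v' :
  (forall t : R, G (t *: v + a) = H (t *: v' + a')) ->
  'D_v G a = 'D_v' H a' /\ (derivable G a v <-> derivable H a' v').
Proof.
move=> E.
have Ga : G a = H a' by have := E 0; rewrite !scale0r !add0r.
have EQ : forall h : R, h^-1 *: ((G \o shift a) (h *: v) - G a) =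
                    h^-1 *: ((H \o shift a') (h *: v') - H a').
  by move=> h /=; rewrite E Ga.
split.
  rewrite /derive; f_equal; f_equal; apply/funext => h; apply: EQ.
rewrite /derivable.
have -> // : (fun h : R => h^-1 *: ((G \o shift a) (h *: v) - G a)) =
          (fun h : R => h^-1 *: ((H \o shift a') (h *: v') - H a')).
by apply/funext => h; apply: EQ.
Qed.

Lemma line_deriv n q (F : 'rV[R]_n -> 'rV[R]_q) (w h : 'rV[R]_n) (x : R) :
  differentiable F (w + x *: h) ->
  derivable (fun t : R => F (w + t *: h)) x 1 /\
  'D_1 (fun t : R => F (w + t *: h)) x = h *m jacobian F (w + x *: h).
Proof.
move=> dF.
have Et : forall t : R, F (w + (t *: (1 : R) + x) *: h) = F (t *: h + (w + x *: h)).
  by move=> t; rewrite -[t *: (1 : R)]/(t * 1) mulr1 scalerDl addrCA.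
have [E1 E2] := @derive_ext _ _ _ (fun t : R => F (w + t *: h)) F x 1 (w + x *: h) h Et.
split; first by apply/E2; exact: diff_derivable.
by rewrite E1 deriveEjacobian.
Qed.

Lemma mvt_coord n q (F : 'rV[R]_n -> 'rV[R]_q) (w h : 'rV[R]_n) i :
  (forall p, differentiable F p) ->
  exists2 c, 0 <= c <= 1 &
    (F (w + h) - F w) 0 i = (h *m jacobian F (w + c *: h)) 0 i.
Proof.
move=> dF.
pose g := fun t : R => F (w + t *: h) 0 i.
have dg : forall x, derivable g x 1 /\ 'D_1 g x = (h *m jacobian F (w + x *: h)) 0 i.
  move=> x; have [d1 d2] := @line_deriv _ _ F w h x (dF (w + x *: h)).
  split; first by move/derivable_mxP : d1; apply.
  by rewrite -d2 derive_mx // mxE.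
have H1 : forall x : R, x \in `]0, 1[%R -> is_derive x 1 g ((h *m jacobian F (w + x *: h)) 0 i).
  move=> x _; have [d1 d2] := dg x; rewrite -d2; exact: derivableP.
have H2 : {within `[0, 1], continuous g}.
  by apply: derivable_within_continuous => x _; have [] := dg x.
have [c hc] := @MVT_segment R g (fun x => (h *m jacobian F (w + x *: h)) 0 i) 0 1 ler01 H1 H2.
move: hc; rewrite in_itv /= => hc; rewrite /g subr0 mulr1 scale1r scale0r addr0 => E.
by exists c => //; rewrite -E [in LHS]mxE [in X in _ + X]mxE.
Qed.

Lemma row_mx_norm_le a b (u : 'rV[R]_a) (v : 'rV[R]_b) c : 0 <= c ->
  `|u| <= c -> `|v| <= c -> `|row_mx u v| <= c.
Proof.
move=> c0 hu hv; apply: mx_norm_le => // i j.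
case: (split_ordP j) => k ->; rewrite ?row_mxEl ?row_mxEr.
  by rewrite (ord1 i); apply: le_trans hu; apply: mx_entry_le.
by rewrite (ord1 i); apply: le_trans hv; apply: mx_entry_le.
Qed.

Lemma cont_row_l a b (c : 'rV[R]_b) : continuous (fun y : 'rV[R]_a => row_mx y c).
Proof.
move=> u A /nbhs_ballP[e /= e0 eA].
apply/nbhs_ballP; exists e => //= v [_ uv]; apply: eA; split => // i j.
case: (split_ordP j) => k ->; rewrite ?row_mxEl ?row_mxEr; first exact: uv.
exact: ballxx.
Qed.

Lemma cont_row_r a b (c : 'rV[R]_a) : continuous (fun y : 'rV[R]_b => row_mx c y).
Proof.
move=> u A /nbhs_ballP[e /= e0 eA].
apply/nbhs_ballP; exists e => //= v [_ uv]; apply: eA; split => // i j.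
case: (split_ordP j) => k ->; rewrite ?row_mxEl ?row_mxEr; last exact: uv.
exact: ballxx.
Qed.

End Calc.

Section Local.
Variables (R : realType) (l m : nat) (f : 'rV[R]_l -> 'rV[R]_m -> 'rV[R]_l).
Local Notation F := (uncurry_rv f).
Hypothesis dF : forall p, differentiable F p.
Hypothesis cJ : continuous (jacobian F).

Lemma F_row y lam : F (row_mx y lam) = f y lam.
Proof. by rewrite /uncurry_rv row_mxKl row_mxKr. Qed.

Lemma f_cont_l lam : continuous (fun y => f y lam).
Proof.
have -> : (fun y => f y lam) = F \o (fun y => row_mx y lam).
  by apply/funext => y /=; rewrite F_row.
move=> y; apply: continuous_comp; first exact: cont_row_l.
exact: differentiable_continuous.
Qed.

Lemma f_cont_r y : continuous (fun lam => f y lam).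
Proof.
have -> : (fun lam => f y lam) = F \o (fun lam => row_mx y lam).
  by apply/funext => lam /=; rewrite F_row.
move=> lam; apply: continuous_comp; first exact: cont_row_r.
exact: differentiable_continuous.
Qed.

Lemma Dx_eq x lam : Dx f x lam = usubmx (jacobian F (row_mx x lam)).
Proof.
have GE : (fun y => f y lam) = F \o (fun y => row_mx y lam).
  by apply/funext => y /=; rewrite F_row.
have L_lin : linear (fun y : 'rV[R]_l => row_mx y (0 : 'rV[R]_m)).
  by move=> a u v; rewrite scale_row_mx add_row_mx scaler0 addr0.
pose LM := GRing.isLinear.Build _ _ _ _ _ L_lin.
pose L : {linear 'rV[R]_l -> 'rV[R]_(l + m)} :=
  HB.pack (fun y : 'rV[R]_l => row_mx y (0 : 'rV[R]_m)) LM.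
have dL : differentiable L x.
  by apply: linear_differentiable; apply: (@cont_row_l R l m 0).
have dI : differentiable (fun y => row_mx y lam) x.
  have -> : (fun y => row_mx y lam) = (fun y => L y + row_mx 0 lam).
    by apply/funext => y /=; rewrite add_row_mx addr0 add0r.
  exact: differentiableD.
have dG : differentiable (fun y => f y lam) x.
  by rewrite GE; apply: differentiable_comp.
apply/row_matrixP => i; rewrite !rowE.
set v := delta_mx 0 i.
rewrite /Dx -deriveEjacobian //.
have Et : forall t : R, f (t *: v + x) lam = F (t *: row_mx v 0 + row_mx x lam).
  by move=> t; rewrite scale_row_mx scaler0 add_row_mx add0r F_row.
have [E _] := @derive_ext R _ _ _ (fun y => f y lam) F x v (row_mx x lam) (row_mx v 0) Et.
rewrite E deriveEjacobian // -[in LHS](vsubmxK (jacobian F _)) mul_row_col mul0mx addr0.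
by [].
Qed.


Lemma mxBE p q (A B : 'M[R]_(p, q)) i j : (A - B) i j = A i j - B i j.
Proof. by rewrite !mxE. Qed.

Lemma lin_est (Xm : 'rV[R]_l) (lm : 'rV[R]_m) eps : 0 < eps ->
  exists2 del, 0 < del & forall y z lam,
    `|y - Xm| < del -> `|z - Xm| < del -> `|lam - lm| < del ->
    `|f y lam - f z lam - (y - z) *m usubmx (jacobian F (row_mx Xm lm))|
      <= eps * `|y - z|.
Proof.
move=> e0.
set p0 := row_mx Xm lm.
set JF := jacobian F.
have lm1 : 0 < (l + m)%:R + 1 :> R by rewrite ltr_pwDr // ler0n.
set e' := eps / ((l + m)%:R + 1).
have e'0 : 0 < e' by rewrite divr_gt0.
have := cJ p0 => /cvgrPdist_lt /(_ e' e'0) /nbhs_ballP [d d0 hd].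
exists (d / 2); first by rewrite divr_gt0.
move=> y z lam hy hz hl.
apply: mx_norm_le; first by rewrite mulr_ge0 // ltW.
move=> i j; rewrite (ord1 i).
set w := row_mx z lam; set h := row_mx (y - z) (0 : 'rV[R]_m).
have [c /andP [c0 c1] E] := @mvt_coord R _ _ F w h j dF.
have wh : w + h = row_mx y lam by rewrite add_row_mx addr0 addrC subrK.
rewrite wh !F_row in E.
have hJ0 : (y - z) *m usubmx (JF p0) = h *m JF p0.
  by rewrite -[in RHS](vsubmxK (JF p0)) mul_row_col mul0mx addr0.
have -> : (f y lam - f z lam - (y - z) *m usubmx (JF p0)) 0 j =
          (h *m (JF (w + c *: h) - JF p0)) 0 j.
  by rewrite mulmxBr hJ0 [LHS]mxBE [RHS]mxBE E.
have hb : ball p0 d (w + c *: h).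
  rewrite -ball_normE /=.
  have -> : p0 - (w + c *: h) = row_mx ((1 - c) *: (Xm - z) + c *: (Xm - y)) (lm - lam).
    rewrite /p0 /w /h scale_row_mx scaler0 add_row_mx addr0 opp_row_mx add_row_mx.
    by congr row_mx; apply/matrixP => a b; rewrite !mxE; ring.
  apply: (@le_lt_trans _ _ (d / 2)); last by rewrite ltr_pdivrMr // ltr_pMr // ltr1n.
  apply: row_mx_norm_le; first by rewrite divr_ge0 // ltW.
    apply: le_trans (ler_normD _ _) _; rewrite !normrZ.
    rewrite (ger0_norm c0) ger0_norm ?subr_ge0 //.
    have h1 : `|Xm - z| <= d / 2 by rewrite distrC ltW.
    have h2 : `|Xm - y| <= d / 2 by rewrite distrC ltW.
    have h3 : (1 - c) * `|Xm - z| <= (1 - c) * (d / 2) by rewrite ler_wpM2l // subr_ge0.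
    have h4 : c * `|Xm - y| <= c * (d / 2) by rewrite ler_wpM2l.
    apply: le_trans (lerD h3 h4) _.
    by rewrite -mulrDl subrK mul1r.
  by rewrite distrC ltW.
have hD := hd _ hb; rewrite /= in hD.
apply: le_trans (mx_entry_le _ _ _ _ 0 j) _.
apply: le_trans (rowmul_norm _ _ _ _ _) _.
have hh : `|h| <= `|y - z|.
  by apply: row_mx_norm_le => //; rewrite normr0.
have hD' : `|JF (w + c *: h) - JF p0| <= e' by rewrite distrC ltW.
have -> : eps = ((l + m)%:R + 1) * e' by rewrite /e' mulrC divfK // gt_eqF.
have lmpos : 0 <= (l + m)%:R :> R by rewrite ler0n.
have k1 : (l + m)%:R * `|JF (w + c *: h) - JF p0| <= (l + m)%:R * e' by rewrite ler_wpM2l.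
apply: le_trans (ler_wpM2r (normr_ge0 h) k1) _.
apply: le_trans (ler_wpM2l _ hh) _; first by rewrite mulr_ge0 // ltW.
apply: ler_wpM2r => //; apply: ler_wpM2r; first exact: ltW.
by rewrite lerDl.
Qed.

End Local.

Section Orbit.
Variables (R : realType) (l m : nat) (f : 'rV[R]_l -> 'rV[R]_m -> 'rV[R]_l)
  (Lam : R -> 'rV[R]_m) (r : R).

Lemma orbit_S n0 w k : Defs.orbit f Lam r n0 w k.+1 =
  Defs.orbit f Lam r (n0 + 1) (f w (Lam (r * n0%:~R))) k.
Proof.
elim: k => [|k IH] /=; first by rewrite addr0.
rewrite -IH /=; congr (f _ (Lam (r * _%:~R))); lia.
Qed.

Lemma orbit_add n0 w a b : Defs.orbit f Lam r n0 w (a + b) =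
  Defs.orbit f Lam r (n0 + a%:Z) (Defs.orbit f Lam r n0 w a) b.
Proof.
elim: b => [|b IH]; first by rewrite addn0.
rewrite addnS /= IH; congr (f _ (Lam (r * _%:~R))); lia.
Qed.

Lemma orbit_x (x : int -> 'rV[R]_l) :
  (forall n : int, x (n + 1) = f (x n) (Lam (r * n%:~R))) ->
  forall n0 k, Defs.orbit f Lam r n0 (x n0) k = x (n0 + k%:Z).
Proof.
move=> hx n0; elim=> [|k IH] /=; first by rewrite addr0.
rewrite IH -hx; congr x; lia.
Qed.

Lemma orbit_cont n0 d : (forall lam, continuous (fun y => f y lam)) ->
  continuous (fun w => Defs.orbit f Lam r n0 w d).
Proof.
move=> hc; elim: d => [|d IH] /=; first by move=> w; exact: cvg_id.
move=> w; exact: (continuous_comp (IH w) (hc _ _)).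
Qed.

End Orbit.

Lemma int_neg (n : int) (a : nat) : n <= - (a%:Z) ->
  exists k : nat, (a <= k)%N /\ n = - k%:Z.
Proof. by move=> h; exists `|n|%N; split; lia. Qed.

Lemma int_a (n2 : int) (j : nat) : n2 - (j.+1)%:Z + 1 = n2 - j%:Z.
Proof. lia. Qed.

Lemma int_b (n2 nS : int) (j : nat) : n2 <= nS -> n2 - j%:Z <= nS.
Proof. lia. Qed.

Lemma int_c (n1 n2 : int) : n2 <= n1 -> n1 = n2 + (absz (n1 - n2)%R)%:Z.
Proof. lia. Qed.

Lemma int_d (n1 : int) (k : nat) : absz (n1 - (n1 - k%:Z))%R = k.
Proof. lia. Qed.

Lemma int_e (n1 n2 : int) (j d k : nat) : n1 = n2 + d%:Z -> k = (j + d)%N ->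
  n1 - k%:Z = n2 - j%:Z.
Proof. lia. Qed.

Lemma int_f (n2 : int) (j : nat) : n2 - j%:Z + j%:Z = n2.
Proof. lia. Qed.

Theorem mainTheorem2 (R : realType) (l m : nat)
  (f : 'rV[R]_l -> 'rV[R]_m -> 'rV[R]_l)
  (Lam : R -> 'rV[R]_m) (lm lp : 'rV[R]_m)
  (X : R -> 'rV[R]_l) (Xm Xp : 'rV[R]_l) (r : R)
  (x : int -> 'rV[R]_l) :
  C1_map (uncurry_rv f) ->
  parameter_shift Lam lm lp ->
  stable_path f Lam lm lp X Xm Xp ->
  0 < r ->
  (forall n : int, x (n + 1) = f (x n) (Lam (r * n%:~R))) ->
  (fun k : nat => x (- k%:Z)) @ \oo --> Xm ->
  exists U : set 'rV[R]_l, open U /\ U Xm /\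
    forall y, U y -> forall n1 : int,
      (fun k : nat => `|phi f Lam r n1 (n1 - k%:Z) y - x n1|) @ \oo --> 0.
Proof.
move=> [dF cJ] [_ [Lm _]] [_ [_ [_ [_ [fXm [_ [_ [srm _]]]]]]]] r0 hx hxm.
destruct l as [|l'].
  exists setT; split; first exact: openT; split => // y _ n1.
  have -> : (fun k : nat => `|phi f Lam r n1 (n1 - k%:Z) y - x n1|) = fun=> 0.
    apply/funext => k; set u := _ - _.
    have -> : u = 0 by apply/rowP => -[].
    by rewrite normr0.

  exact: cvg_cst.

set J := Dx f Xm lm.
have sJ := spec_small _ _ _ srm.
have lpos : 0 < l'.+1%:R :> R by rewrite ltr0n.
set e1 := (2 * l'.+1%:R)^-1 : R.
have e10 : 0 < e1 by rewrite invr_gt0 mulr_gt0.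
have [Nf HNf] : exists Nf : 'I_l'.+1 * 'I_l'.+1 -> nat, forall ij n, (Nf ij <= n)%N ->
    `|(J ^+ n) ij.1 ij.2| < e1.
  apply: (@fin_all_exists _ (fun=> nat) (fun ij N => forall n, (N <= n)%N -> `|(J ^+ n) ij.1 ij.2| < e1)) => ij.
  exact: sJ.
set K := (\max_ij Nf ij).+1.
have K0 : (0 < K)%N by [].
have hK : forall v : 'rV[R]_l'.+1, `|v *m J ^+ K| <= `|v| / 2.
  move=> v; apply: le_trans (rowmul_le _ _ _ v (J ^+ K) e1 (ltW e10) _) _.
    move=> i j; apply: ltW; apply: (HNf (i, j)).
    by apply: leqW; exact: (leq_bigmax (i, j)).
  have -> : l'.+1%:R * e1 = 2^-1 by rewrite /e1; field.
  by rewrite mulrC.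
set C := Cn _ _ J K.
set N := Nn _ _ J K.
have C1 : 1 <= C := Cn_ge1 _ _ J K.
have C0 : 0 < C by apply: lt_le_trans ltr01 C1.
have Nge : forall v, `|v| <= N v := Nn_ge _ _ J K K0.
have Nle : forall v, N v <= C * `|v| := Nn_le _ _ J K.
have NDl : forall u v, N (u + v) <= N u + N v := NnD _ _ J K.
have NNl : forall v, N (- v) = N v := NnN _ _ J K.
have NJ : forall v, N (v *m J) <= (1 - (2 * C)^-1) * N v := NnJ _ _ J K K0 hK.
set eps := (4 * C * C)^-1.
have eps0 : 0 < eps by rewrite invr_gt0 mulr_gt0 // mulr_gt0.
set rho := 1 - (4 * C)^-1.
have rho0 : 0 <= rho.
  rewrite subr_ge0 invf_le1; last by rewrite mulr_gt0.
  by apply: le_trans C1 _; rewrite ler_peMl // ?ler1n // ltW.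
have rho1 : rho < 1 by rewrite /rho gtrBl invr_gt0 mulr_gt0.
have [del del0 hest] := lin_est _ _ _ f dF cJ Xm lm eps eps0.
rewrite -(Dx_eq _ _ _ _ dF Xm lm) -/J in hest.
have contr : forall w z lam, `|w - Xm| < del -> `|z - Xm| < del -> `|lam - lm| < del ->
    N (f w lam - f z lam) <= rho * N (w - z).
  move=> w z lam hw hz hl.
  have E := hest w z lam hw hz hl.
  set Er := f w lam - f z lam - (w - z) *m J in E.
  have -> : f w lam - f z lam = (w - z) *m J + Er by rewrite /Er [RHS]addrCA subrr addr0.
  apply: le_trans (NDl _ _) _.
  have h1 := NJ (w - z).
  have h2 : N Er <= C * (eps * N (w - z)).
    apply: le_trans (Nle _) _; apply: ler_wpM2l; first exact: ltW.
    apply: le_trans E _; apply: ler_wpM2l; first exact: ltW.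
    exact: Nge.
  have -> : rho * N (w - z) = (1 - (2 * C)^-1) * N (w - z) + C * (eps * N (w - z)).
    by rewrite /rho /eps; field; rewrite gt_eqF.
  exact: lerD h1 h2.
set e3 := (1 - rho) * del / C.
have e30 : 0 < e3 by rewrite /e3 divr_gt0 // mulr_gt0 // subr_gt0.
have := f_cont_r _ _ _ f dF Xm lm => /cvgrPdist_lt /(_ e3 e30) /nbhs_ballP [d3 d30 hd3].
set dl := Num.min del d3.
have dl0 : 0 < dl by rewrite lt_min del0 d30.
have := Lm => /cvgrPdist_lt /(_ dl dl0) [M [Mreal HM]].
have delC : 0 < del / C by rewrite divr_gt0.
have := hxm => /cvgrPdist_lt /(_ (del / C) delC) /near_oo_ex [K1 HK1].
set K2 := (Num.Def.archi_bound (`|M| / r)).+1.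
set nS : int := - ((K1 + K2)%N%:Z).
have cond : forall n : int, n <= nS ->
    N (x n - Xm) < del /\ `|Lam (r * n%:~R) - lm| < dl.
  move=> n hn.
  have [k [hk ->]] := int_neg _ _ hn.
  split.
    have := HK1 k (leq_trans (leq_addr _ _) hk); rewrite distrC => h.
    apply: le_lt_trans (Nle _) _.
    by rewrite -ltr_pdivlMl // mulrC.
  rewrite distrC; apply: HM.
  rewrite mulrNz -pmulrn mulrN.
  have hK2 : (K2 <= k)%N by apply: leq_trans hk; rewrite leq_addl.
  have ab : `|M| / r < K2%:R.
    apply: lt_le_trans (archi_boundP _) _; first by rewrite divr_ge0 // ltW.
    by rewrite ler_nat.
  have : `|M| < r * k%:R.
    rewrite mulrC -ltr_pdivrMr //; apply: lt_le_trans ab _.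
    by rewrite ler_nat.
  have : - M <= `|M| by rewrite -normrN ler_norm.
  lra.
have reg : forall w, N (w - Xm) < del -> `|w - Xm| < del.
  by move=> w h; apply: le_lt_trans (Nge _) h.
have inv : forall n, n <= nS -> forall w, N (w - Xm) < del ->
    N (f w (Lam (r * n%:~R)) - Xm) < del.
  move=> n hn w hw; have [cx cl] := cond n hn.
  move: cl; rewrite lt_min => /andP [cl1 cl3].
  have e : N (f Xm (Lam (r * n%:~R)) - Xm) < (1 - rho) * del.
    have : ball lm d3 (Lam (r * n%:~R)) by rewrite -ball_normE /= distrC.
    move/hd3; rewrite /= fXm distrC => h.
    apply: le_lt_trans (Nle _) _.
    by rewrite -ltr_pdivlMl // [C^-1 * _]mulrC.
  have hX : `|Xm - Xm| < del by rewrite subrr normr0.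
  have c := contr w Xm _ (reg w hw) hX cl1.
  have -> : f w (Lam (r * n%:~R)) - Xm =
      (f w (Lam (r * n%:~R)) - f Xm (Lam (r * n%:~R))) + (f Xm (Lam (r * n%:~R)) - Xm).
    by rewrite addrA subrK.
  apply: le_lt_trans (NDl _ _) _.
  have c2 : rho * N (w - Xm) <= rho * del by apply: ler_wpM2l => //; exact: ltW.
  lra.
have step : forall n, n <= nS -> forall w, N (w - Xm) < del ->
    N (f w (Lam (r * n%:~R)) - x (n + 1)) <= rho * N (w - x n).
  move=> n hn w hw; rewrite hx; have [cx cl] := cond n hn.
  move: cl; rewrite lt_min => /andP [cl1 _].
  by apply: contr => //; apply: reg.
have main : forall n2, n2 <= nS -> forall (j : nat) (w : 'rV[R]_l'.+1), N (w - Xm) < del ->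
    N (Defs.orbit f Lam r (n2 - j%:Z) w j - x n2) <= rho ^+ j * N (w - x (n2 - j%:Z)).
  move=> n2 h2; elim=> [|j IH] w hw.
    by rewrite /= subr0 expr0 mul1r.
  rewrite orbit_S.
  have hn := int_b _ _ j.+1 h2.
  rewrite int_a.
  apply: le_trans (IH _ (inv _ hn _ hw)) _.
  rewrite -(int_a n2 j) exprSr -mulrA.
  apply: ler_wpM2l; first exact: exprn_ge0.
  exact: step.
exists (ball Xm (del / C)); split; first exact: ball_open.
split; first exact: ballxx.
move=> y hy n1.
have hyN : N (y - Xm) < del.
  move: hy; rewrite -ball_normE /= distrC => hy.
  apply: le_lt_trans (Nle _) _.
  by rewrite -ltr_pdivlMl // mulrC.
have [n2 h2a h2b] : exists2 n2 : int, n2 <= nS & n2 <= n1.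
  by case: (lerP n1 nS) => h; [exists n1 | exists nS] => //; exact: ltW.
set d := absz (n1 - n2)%R.
have dE : n1 = n2 + d%:Z := int_c _ _ h2b.
set Phi := fun w => Defs.orbit f Lam r n2 w d.
have cPhi : continuous Phi := orbit_cont _ _ _ f Lam r n2 d (f_cont_l _ _ _ f dF).
have xn1 : x n1 = Phi (x n2) by rewrite /Phi orbit_x // -dE.
apply/cvgrPdist_lt => e e0.
have := cPhi (x n2) => /cvgrPdist_lt /(_ e e0) /nbhs_ballP [dP dP0 hP].
have [J0 HJ0] := geo_small _ (2 * del) rho0 rho1 dP0.
exists (d + J0)%N => // k /= hk.
set j := (k - d)%N.
have kE : k = (j + d)%N by rewrite /j subnK // (leq_trans _ hk) // leq_addr.
have hj : (J0 <= j)%N by rewrite /j leq_subRL ?(leq_trans _ hk) ?leq_addr // addnC.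
have -> : phi f Lam r n1 (n1 - k%:Z) y = Phi (Defs.orbit f Lam r (n2 - j%:Z) y j).
  rewrite /phi /Phi int_d (int_e _ _ _ _ _ dE kE) kE orbit_add int_f.
  by [].
rewrite xn1 sub0r normrN normr_id distrC.
apply: hP; rewrite -ball_normE /= distrC.
have hn := main n2 h2a j y hyN.
have hb : N (y - x (n2 - j%:Z)) < 2 * del.
  have -> : y - x (n2 - j%:Z) = (y - Xm) + (Xm - x (n2 - j%:Z)) by rewrite addrA subrK.
  apply: le_lt_trans (NDl _ _) _; rewrite -[N (Xm - _)]NNl opprB.
  have [cx _] := cond (n2 - j%:Z) (int_b _ _ j h2a).
  lra.
apply: le_lt_trans (Nge _) _.
apply: le_lt_trans hn _.
apply: le_lt_trans (HJ0 j hj).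
by apply: ler_wpM2l; [exact: exprn_ge0 | exact: ltW].
Qed.
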